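(* Let $\Lambda$ be a canonical algebra of type $(m_1,\dots,m_n)$ and let $\mathbf d\in\mathbf P$ satisfy $\langle\mathbf d,\mathbf h\rangle=1$. Then $\mathbf d=r\mathbf h+\mathbf e(l_1,\ldots,l_n)$ for some $r\in\mathbb N$ and $l_i\in[0,m_i-1]$, $i\in[1,n]$. In particular $\langle\mathbf d,\mathbf d\rangle=1$.
   Context: $[a,b]=\{l\in\mathbb Z:a\le l\le b\}$. $\Lambda$ is the canonical algebra of type $(m_1,\dots,m_n)$ ($n\ge3$, $m_i\ge2$) over an algebraically closed field $k$: the bound quiver algebra of the quiver $\Delta$ with vertices $\Delta_0=\{0,\infty\}\cup\{(i,j):i\in[1,n],j\in[1,m_i-1]\}$, arrows $\alpha_{i,j}:(i,j)\to(i,j-1)$ ($j\in[1,m_i]$, conventions $(i,0)=0$, $(i,m_i)=\infty$), and relations $\alpha_{1,1}\cdots\alpha_{1,m_1}+\lambda_i\alpha_{2,1}\cdots\alpha_{2,m_2}-\alpha_{i,1}\cdots\alpha_{i,m_i}$, $i\in[3,n]$, for fixed pairwise distinct nonzero $\lambda_i\in k$. For $\mathbf d\in\mathbb Z^{\Delta_0}$ write $d_{i,0}=d_0$, $d_{i,m_i}=d_\infty$, $d_{i,j}=d_{(i,j)}$. The Ringel form is $\langle\mathbf d',\mathbf d''\rangle=d_0'd_0''+\sum_{i\in[1,n],j\in[1,m_i-1]}d'_{i,j}d''_{i,j}+d'_\infty d''_\infty-\sum_{i\in[1,n],j\in[1,m_i]}d'_{i,j}d''_{i,j-1}+(n-2)d'_\infty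 d''_0$. $\mathbf h$ is the vector with all coordinates $1$; $(\mathbf e_x)$ is the standard basis, $\mathbf e_{i,j}=\mathbf e_{(i,j)}$, and $\mathbf e(l_1,\dots,l_n)=\mathbf e_0+\sum_{i\in[1,n]}\sum_{j\in[1,l_i]}\mathbf e_{i,j}$. Let $\mathcal P$ be the additive closure of the indecomposable $\Lambda$-modules $X$ with $\langle\dim X,\mathbf h\rangle>0$, and $\mathbf P$ the set of dimension vectors of modules in $\mathcal P$. (It is known that $\mathbf d\in\mathbf P$ iff either $\mathbf d=0$, or $d_0>d_\infty\ge0$ and $d_{i,j}\ge d_{i,j+1}$ for all $i\in[1,n]$, $j\in[0,m_i-1]$.) *)

(* Defs.v *)
From mathcomp Require Import all_boot all_order all_algebra.
Set Implicit Arguments. Unset Strict Implicit. Unset Printing Implicit Defensive.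
Import Order.TTheory GRing.Theory Num.Theory.
Local Open Scope ring_scope.

(* Canonical algebra of type m = (m_1,...,m_n); arms indexed by i : 'I_n
   (arm i corresponds to the paper's arm i+1).  Vertices: 0, oo and
   (i,j) for 1 <= j <= m i - 1. *)

(* An integer vector in Z^{Delta_0}: coordinate at 0, at oo, and at (i,j).
   Only the values dmid i j with 1 <= j <= m i - 1 are meaningful. *)
Record dimvec (n : nat) := DimVec {
  d0 : int;
  dinf : int;
  dmid : 'I_n -> nat -> int }.

Definition dc (n : nat) (m : 'I_n -> nat) (d : dimvec n) (i : 'I_n) (j : nat) : int :=
  if j == 0%N then d0 d else if j == m i then dinf d else dmid d i j.

Definition dveq (n : nat) (m : 'I_n -> nat) (d d' : dimvec n) : Prop :=
  [/\ d0 d = d0 d', dinf d = dinf d' &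
      forall (i : 'I_n) (j : nat), (1 <= j <= (m i).-1)%N -> dmid d i j = dmid d' i j].

Definition hvec (n : nat) : dimvec n := DimVec 1 1 (fun _ _ => 1).

Definition zvec (n : nat) : dimvec n := DimVec 0 0 (fun _ _ => 0).

(* e(l_1,...,l_n) = e_0 + sum_i sum_{j=1}^{l_i} e_{i,j}  (for l_i <= m_i - 1). *)
Definition evec (n : nat) (l : 'I_n -> nat) : dimvec n :=
  DimVec 1 0 (fun i j => if (1 <= j <= l i)%N then 1 else 0).

Definition add_rh (n : nat) (r : nat) (d : dimvec n) : dimvec n :=
  DimVec (r%:Z + d0 d) (r%:Z + dinf d) (fun i j => r%:Z + dmid d i j).

Definition ringel (n : nat) (m : 'I_n -> nat) (d' d'' : dimvec n) : int :=
  d0 d' * d0 d''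
  + \sum_(i < n) \sum_(1 <= j < m i) dmid d' i j * dmid d'' i j
  + dinf d' * dinf d''
  - \sum_(i < n) \sum_(1 <= j < (m i).+1) dc m d' i j * dc m d'' i j.-1
  + (n%:Z - 2) * (dinf d' * d0 d'').

(* The set P of dimension vectors of modules in the additive closure of the
   indecomposables X with <dim X, h> > 0, via its known characterization. *)
Definition inP (n : nat) (m : 'I_n -> nat) (d : dimvec n) : Prop :=
  dveq m d (zvec n) \/
  ((dinf d < d0 d) /\ (0 <= dinf d) /\
   forall (i : 'I_n) (j : nat), (j < m i)%N -> dc m d i j.+1 <= dc m d i j).

(* Main.v *)
Require Import Defs.
From mathcomp Require Import all_boot all_order all_algebra.
From mathcomp Require Import zify ring lra.
Import Order.TTheory GRing.Theory Num.Theory.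
Local Open Scope ring_scope.

Lemma mono_trans (x : nat -> int) (m : nat) :
  (forall j, (j < m)%N -> x j.+1 <= x j) ->
  forall j k, (j + k <= m)%N -> x (j + k)%N <= x j.
Proof.
move=> H j; elim=> [|k IH] hk; first by rewrite addn0.
rewrite addnS; apply: le_trans (IH _); last by lia.
apply: H; lia.
Qed.

Lemma step_exists (r : int) : forall (m : nat) (x : nat -> int),
  x 0%N = r + 1 -> x m = r ->
  (forall j, (j < m)%N -> x j.+1 <= x j) ->
  exists l, (l < m)%N /\ forall j, (j <= m)%N -> x j = r + (if (j <= l)%N then 1 else 0).
Proof.
elim=> [|k IH] x h0 hm hmono.
  by move: hm; rewrite h0 => /eqP; rewrite -subr_eq0 addrC addKr.
have Hle : forall j, (j <= k.+1)%N -> r <= x j /\ x j <= r + 1.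
  move=> j hj; split.
    have := @mono_trans x _ hmono j (k.+1-j)%N; rewrite subnKC // hm; apply; lia.
  have := @mono_trans x _ hmono 0 j; rewrite add0n h0; apply; lia.
have [hk|hk] := eqVneq (x k) (r + 1).
  exists k; split => // j hj.
  have [hjk|hjk] := leqP j k.
    have := Hle j hj; have : x k <= x j.
      have := @mono_trans x _ hmono j (k-j)%N; rewrite subnKC //; apply; lia.
    rewrite hk; lia.
  have -> : j = k.+1 by lia.
  by rewrite hm addr0.
have hxk : x k = r.
  have [a b] := Hle k (leqnSn k).
  move/eqP: hk => hk; lia.
have [l [hl Hl]] := IH x h0 hxk (fun j hj => hmono j (ltnW hj)).
exists l; split; first lia.
move=> j hj; have [hjk|hjk] := leqP j k; first exact: Hl.
have -> : j = k.+1 by lia.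
by rewrite hm ifF ?addr0 //; apply/negbTE; lia.
Qed.

Lemma arm_dd (x : nat -> int) (r : int) (l m : nat) : (l < m)%N ->
  (forall j, (j <= m)%N -> x j = r + (if (j <= l)%N then 1 else 0)) ->
  \sum_(1 <= j < m) x j * x j - \sum_(1 <= j < m.+1) x j * x j.-1 = - (r * (r + 1)).
Proof.
move=> hlm Hx.
have key : forall k, (k <= m)%N ->
    \sum_(1 <= j < k) (x j * x j - x j * x j.-1) = if (l.+1 < k)%N then - r else 0.
  elim=> [|k IH] hk; first by rewrite big_geq.
  have [->|k0] := eqVneq k 0%N; first by rewrite big_geq.
  rewrite big_nat_recr /=; last by lia.
  rewrite IH; last by lia.
  rewrite !Hx; try lia.
  case: ifP; case: ifP; case: ifP; case: ifP => *; (lia || ring).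
rewrite big_nat_recr /=; last by lia.
have -> : forall a b c : int, a - (b + c) = (a - b) - c by move=> *; ring.
rewrite -sumrB key // !Hx; try lia.
case: ifP; case: ifP; case: ifP => *; (lia || ring).
Qed.

Lemma arm_h (x : nat -> int) (m : nat) : (1 <= m)%N ->
  \sum_(1 <= j < m) x j * 1 - \sum_(1 <= j < m.+1) x j * 1 = - x m.
Proof.
move=> hm; rewrite big_nat_recr //=; ring.
Qed.

Theorem lemma1p6 (n : nat) (m : 'I_n -> nat) (d : dimvec n) :
  (3 <= n)%N ->
  (forall i, 2 <= m i)%N ->
  inP m d ->
  ringel m d (hvec n) = 1 ->
  (exists (r : nat) (l : 'I_n -> nat),
      (forall i, l i <= (m i).-1)%N /\ dveq m d (add_rh r (evec l)))
  /\ ringel m d d = 1.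
Proof.
move=> hn hm hP hh.
have dc0 : forall i, dc m d i 0 = d0 d by [].
have dcm : forall i, dc m d i (m i) = dinf d.
  move=> i; rewrite /dc eqxx; have -> : (m i == 0%N) = false by apply/negbTE; have := hm i; lia.
  done.
have dcmid : forall i j, (0 < j < m i)%N -> dc m d i j = dmid d i j.
  move=> i j hj; rewrite /dc.
  have -> : (j == 0%N) = false by apply/negbTE; lia.
  have -> : (j == m i) = false by apply/negbTE; lia.
  done.
have dmidE : forall (e : dimvec n) i, \sum_(1 <= j < m i) dmid d i j * dmid e i j
    = \sum_(1 <= j < m i) dc m d i j * dmid e i j.
  move=> e i; apply: eq_big_nat => j hj; rewrite dcmid //.
have Hh : d0 d - dinf d = 1.
  move: hh; rewrite /ringel /=.
  have E : \sum_(i < n) \sum_(1 <= j < m i) dmid d i j * 1 -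
           \sum_(i < n) \sum_(1 <= j < (m i).+1) dc m d i j * dc m (hvec n) i j.-1
           = - (dinf d *+ n).
    have -> : -(dinf d *+ n) = \sum_(i < n) - dinf d by rewrite sumrN sumr_const card_ord.
    rewrite -sumrB.
    apply: eq_bigr => i _.
    have dch : forall j, dc m (hvec n) i j = 1 by move=> j; rewrite /dc; do 2?case: ifP.
    under [X in _ - X]eq_bigr => j _ do rewrite dch.
    rewrite (@eq_big_nat _ _ _ 1 (m i) (fun j => dmid d i j * 1) (fun j => dc m d i j * 1)); last first.
      by move=> j hj; rewrite dcmid.
    rewrite arm_h ?dcm //; have := hm i; lia.
  have -> : forall a b c e f : int, a + b + c - e + f = a + c + f + (b - e) by move=> *; ring.
  rewrite E -mulr_natr natz => <-; ring.
have hd0 : d0 d = dinf d + 1 by rewrite -Hh; ring.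
case: hP => [[h0 hinf _]|[hlt [hge hmono]]].
  by move: Hh; rewrite h0 hinf.
have Hex : forall i : 'I_n, exists l, (l < m i)%N /\ forall j, (j <= m i)%N ->
    dc m d i j = dinf d + (if (j <= l)%N then 1 else 0).
  move=> i; apply: step_exists; [by rewrite dc0 hd0 | exact: dcm | exact: hmono].
have [l Hl] := fin_all_exists Hex.
have hr : (`|dinf d|%N)%:Z = dinf d by rewrite gez0_abs.
split.
  exists `|dinf d|%N, l; split; first by move=> i; have := (Hl i).1; lia.
  split => /=; rewrite hr; [lia | lia|].
  move=> i j hj; rewrite -dcmid; last by have := hm i; lia.
  rewrite (Hl i).2; last by lia.
  by case: ifP; case: ifP => //; lia.
rewrite /ringel.
have E : \sum_(i < n) \sum_(1 <= j < m i) dmid d i j * dmid d i j -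
         \sum_(i < n) \sum_(1 <= j < (m i).+1) dc m d i j * dc m d i j.-1
         = - (dinf d * (dinf d + 1)) *+ n.
  rewrite -[X in _ *+ X]card_ord -sumr_const -sumrB.
  apply: eq_bigr => i _.
  rewrite (@eq_big_nat _ _ _ 1 (m i) (fun j => dmid d i j * dmid d i j) (fun j => dc m d i j * dc m d i j)); last first.
    by move=> j hj; rewrite dcmid.
  by case: (Hl i) => h1 h2; apply: (arm_dd _ _ _ _ h1 h2).
have -> : forall a b c e f : int, a + b + c - e + f = a + c + f + (b - e) by move=> *; ring.
rewrite E -mulr_natr natz hd0; ring.
Qed.
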